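(* Let $\|\cdot\|$ be a norm on (linear maps generated by) quantum operations which is sub-multiplicative, i.e. $\|\Theta_1\circ\Theta_2\|\le\|\Theta_1\|\|\Theta_2\|$, and sub-multiplicative with respect to tensor products, i.e. $\|\Theta_1\otimes\Theta_2\|\le\|\Theta_1\|\|\Theta_2\|$, for all $\Theta_1,\Theta_2$. Suppose $\|\Phi\|\le 1$ for every detection-incoherent operation $\Phi$. Then the functional $$M(\Theta)=\min_{\Phi\in\mathcal{DI}}\|\Delta\Theta-\Delta\Phi\|,$$ where the minimum runs over detection-incoherent operations with the same input and output systems as $\Theta$, is a measure in the detection-incoherent setting.
   Context: Every finite-dimensional system carries a fixed orthonormal incoherent basis $\{|i\rangle\}$; composite systems use the product basis. The total dephasing map is $\Delta(\rho)=\sum_i|i\rangle\langle i|\rho|i\rangle\langle i|$ (on composite systems the tensor product of the dephasing maps of the subsystems). A quantum operation is a completely positive trace-preserving linear map between finite-dimensional matrix spaces; compositions are written without $\circ$. A quantum operation $\Phi$ is detection-incoherent ($\Phi\in\mathcal{DI}$) iff $\Delta\Phi=\Delta\Phi\Delta$. In the detection-incoherent setting, the free operations are the detection-incoherent ones, and a super-operation is free iff it is a finite composition of elemental super-operations $\Theta\mapsto\Phi\circ\Theta$, $\Theta\mapsto\Theta\circ\Phi$, $\Theta\mapsto\Theta\otimes\Phi$, $\Theta\mapsto\Phi\otimes\Theta$ with $\Phi$ free (dimensions matching). A measure is a functional $M$ from quantum operations to $[0,\infty)$ such that (i) $M(\Theta)=0$ iff $\Theta$ is free; (ii) $M(\mathcal{F}[\Theta])\le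 M(\Theta)$ for all $\Theta$ and all free super-operations $\mathcal{F}$; (iii) $M$ is convex: $M(t\Theta+(1-t)\Psi)\le tM(\Theta)+(1-t)M(\Psi)$ for $t\in[0,1]$ and $\Theta,\Psi$ with the same input and output systems. *)

(* Defs.v *)
From HB Require Import structures.
From mathcomp Require Import all_boot all_order all_algebra.
From mathcomp Require Import complex mxtens.
From mathcomp Require Import classical_sets reals.

Set Implicit Arguments.
Unset Strict Implicit.
Unset Printing Implicit Defensive.

Import Order.TTheory GRing.Theory Num.Theory.
Local Open Scope ring_scope.
Local Open Scope classical_set_scope.

(* A finite-dimensional system is identified with its dimension n; its
   incoherent basis is the standard basis of C^n.  The composite of systems of
   dimensions m and n is the system of dimension m*n, whose standard basis is
   the product basis via mxtens_index : 'I_m * 'I_n -> 'I_(m*n). *)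

(* Linear maps 'M_m -> 'M_n (super-operators), represented by their matrix
   acting on row-vectorised matrices (mxvec). *)
Definition superop (R : realType) (m n : nat) := 'M[R[i]]_(m * m, n * n).

Definition soapp {R : realType} {m n : nat} (T : superop R m n) (X : 'M[R[i]]_m)
  : 'M[R[i]]_n := vec_mx (mxvec X *m T).

(* composition  T1 o T2  (T2 applied first) *)
Definition socomp {R : realType} {m n k : nat}
  (T1 : superop R n k) (T2 : superop R m n) : superop R m k := T2 *m T1.

(* tensor product of super-operators: the linear map sending
   A (x) B to T1(A) (x) T2(B) *)
Definition sotens {R : realType} {m1 n1 m2 n2 : nat}
  (T1 : superop R m1 n1) (T2 : superop R m2 n2) : superop R (m1 * m2) (n1 * n2) :=
  lin_mx (fun X : 'M[R[i]]_(m1 * m2) =>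
    \sum_(i < m1) \sum_(j < m1) \sum_(k < m2) \sum_(l < m2)
      X (mxtens_index (i, k)) (mxtens_index (j, l)) *:
        (soapp T1 (delta_mx i j) *t soapp T2 (delta_mx k l))).

Definition soid (R : realType) (n : nat) : superop R n n := 1%:M.

Definition dephase (R : realType) (n : nat) : superop R n n :=
  lin_mx (fun X : 'M[R[i]]_n => diag_mx (\row_i X i i)).

Definition psdmx {R : realType} {n : nat} (A : 'M[R[i]]_n) : Prop :=
  forall x : 'cV[R[i]]_n, 0 <= ((map_mx Num.conj x)^T *m A *m x) 0 0.

Definition positive_map {R : realType} {m n : nat} (T : superop R m n) : Prop :=
  forall X : 'M[R[i]]_m, psdmx X -> psdmx (soapp T X).

Definition completely_positive {R : realType} {m n : nat} (T : superop R m n)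
  : Prop := forall k : nat, positive_map (sotens (soid R k) T).

Definition trace_preserving {R : realType} {m n : nat} (T : superop R m n)
  : Prop := forall X : 'M[R[i]]_m, \tr (soapp T X) = \tr X.

Definition quantum_op {R : realType} {m n : nat} (T : superop R m n) : Prop :=
  completely_positive T /\ trace_preserving T.

Definition DI {R : realType} {m n : nat} (P : superop R m n) : Prop :=
  quantum_op P /\
  socomp (dephase R n) P = socomp (socomp (dephase R n) P) (dephase R m).

Definition in_qspan {R : realType} {m n : nat} (T : superop R m n) : Prop :=
  exists (k : nat) (c : 'I_k -> R[i]) (P : 'I_k -> superop R m n),
    (forall i, quantum_op (P i)) /\ T = \sum_(i < k) c i *: P i.

Definition norm_on_qspan {R : realType} {m n : nat} (nrm : superop R m n -> R)
  : Prop :=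
  (forall x, in_qspan x -> 0 <= nrm x) /\
  (forall x, in_qspan x -> nrm x = 0 -> x = 0) /\
  (forall (a : R[i]) x, in_qspan x -> nrm (a *: x) = Normc.normc a * nrm x) /\
  (forall x y, in_qspan x -> in_qspan y -> nrm (x + y) <= nrm x + nrm y).

Inductive free_superop {R : realType} :
  forall m n m' n' : nat, (superop R m n -> superop R m' n') -> Prop :=
| FS_post m n k (P : superop R n k) : DI P ->
    @free_superop R m n m k (fun T => socomp P T)
| FS_pre m n k (P : superop R k m) : DI P ->
    @free_superop R m n k n (fun T => socomp T P)
| FS_tensr m n k l (P : superop R k l) : DI P ->
    @free_superop R m n (m * k) (n * l) (fun T => sotens T P)
| FS_tensl m n k l (P : superop R k l) : DI P ->
    @free_superop R m n (k * m) (l * n) (fun T => sotens P T)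
| FS_comp m n m' n' m'' n'' (F : superop R m n -> superop R m' n')
    (G : superop R m' n' -> superop R m'' n'') :
    @free_superop R m n m' n' F -> @free_superop R m' n' m'' n'' G ->
    @free_superop R m n m'' n'' (fun T => G (F T)).

Definition DI_measure {R : realType} (M : forall m n : nat, superop R m n -> R)
  : Prop :=
  (forall m n (T : superop R m n), quantum_op T -> 0 <= M m n T) /\
  (forall m n (T : superop R m n), quantum_op T -> (M m n T = 0 <-> DI T)) /\
  (forall m n m' n' (F : superop R m n -> superop R m' n') (T : superop R m n),
      free_superop F -> quantum_op T -> M m' n' (F T) <= M m n T) /\
  (forall m n (T S : superop R m n) (t : R), 0 <= t <= 1 ->
      quantum_op T -> quantum_op S ->
      M m n (t%:C%C *: T + (1 - t)%:C%C *: S) <= t * M m n T + (1 - t) * M m n S).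

Definition dist_DI {R : realType} (nrm : forall m n : nat, superop R m n -> R)
  (m n : nat) (T : superop R m n) : R :=
  inf [set nrm m n (socomp (dephase R n) T - socomp (dephase R n) P)
      | P in [set P : superop R m n | DI P]].

(* Main.v *)
Require Import Defs.
From HB Require Import structures.
From mathcomp Require Import all_boot all_order all_algebra.
From mathcomp Require Import complex mxtens.
From mathcomp Require Import classical_sets reals.
From mathcomp Require boolp topology normedtype derive.
From mathcomp Require Import ring lra.
Import Order.TTheory GRing.Theory Num.Theory.
Local Open Scope ring_scope.

Set Implicit Arguments.
Unset Strict Implicit.
Unset Printing Implicit Defensive.


Section P1.
Variable R : realType.
Local Notation C := (R[i]).

Lemma soapp_lin_mx m1 n1 m2 n2 (f : 'M[C]_(m1, n1) -> 'M[C]_(m2, n2))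
  (fl : forall a X Y, f (a *: X + Y) = a *: f X + f Y) X :
  vec_mx (mxvec X *m lin_mx f) = f X.
Proof.
pose F : {linear 'M[C]_(m1, n1) -> 'M[C]_(m2, n2)} :=
  HB.pack f (GRing.isLinear.Build _ _ _ _ f fl).
exact: (mx_vec_lin F).
Qed.

Lemma soappDZ m n (T : superop R m n) a X Y :
  soapp T (a *: X + Y) = a *: soapp T X + soapp T Y.
Proof. rewrite /soapp linearP mulmxDl -scalemxAl linearP; reflexivity. Qed.

Lemma soappD m n (T : superop R m n) X Y : soapp T (X + Y) = soapp T X + soapp T Y.
Proof. by rewrite -[X]scale1r soappDZ !scale1r. Qed.

Lemma soappZ m n (T : superop R m n) a X : soapp T (a *: X) = a *: soapp T X.
Proof. by rewrite -[_ *: X]addr0 soappDZ /soapp linear0 mul0mx linear0 addr0. Qed.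

Lemma soapp0 m n (T : superop R m n) : soapp T 0 = 0.
Proof. by rewrite /soapp linear0 mul0mx linear0. Qed.

Lemma soappN m n (T : superop R m n) X : soapp T (- X) = - soapp T X.
Proof. by rewrite -scaleN1r soappZ scaleN1r. Qed.

Lemma soapp_sum m n (T : superop R m n) I (r : seq I) (P : pred I) F :
  soapp T (\sum_(i <- r | P i) F i) = \sum_(i <- r | P i) soapp T (F i).
Proof.
by apply: (big_morph _ (soappD T) (soapp0 T)).
Qed.

Lemma soappTDZ m n (T S : superop R m n) a X :
  soapp (a *: T + S) X = a *: soapp T X + soapp S X.
Proof. rewrite /soapp mulmxDr -scalemxAr linearP; reflexivity. Qed.

Lemma soappTD m n (T S : superop R m n) X :
  soapp (T + S) X = soapp T X + soapp S X.
Proof. by rewrite -[T]scale1r soappTDZ !scale1r. Qed.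

Lemma soappTZ m n (T : superop R m n) a X :
  soapp (a *: T) X = a *: soapp T X.
Proof. by rewrite /soapp -scalemxAr linearZ. Qed.

Lemma soappTN m n (T : superop R m n) X : soapp (- T) X = - soapp T X.
Proof. by rewrite -scaleN1r soappTZ scaleN1r. Qed.

Lemma soappT0 m n X : soapp (0 : superop R m n) X = 0.
Proof. by rewrite /soapp mulmx0 linear0. Qed.

Lemma soappTB m n (T S : superop R m n) X :
  soapp (T - S) X = soapp T X - soapp S X.
Proof. by rewrite soappTD soappTN. Qed.

Lemma soapp_comp m n k (T1 : superop R n k) (T2 : superop R m n) X :
  soapp (socomp T1 T2) X = soapp T1 (soapp T2 X).
Proof. by rewrite /soapp /socomp vec_mxK mulmxA. Qed.

Lemma superop_ext m n (T S : superop R m n) :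
  (forall X, soapp T X = soapp S X) -> T = S.
Proof.
move=> H; apply/row_matrixP => i.
have := H (vec_mx (delta_mx 0 i)).
by rewrite /soapp vec_mxK -!rowE => /(can_inj vec_mxK).
Qed.

Lemma soapp_id n X : soapp (soid R n) X = X.
Proof. by rewrite /soapp /soid mulmx1 mxvecK. Qed.

Lemma socomp_id_l m n (T : superop R m n) : socomp (soid R n) T = T.
Proof. by rewrite /socomp /soid mulmx1. Qed.

Lemma socomp_id_r m n (T : superop R m n) : socomp T (soid R m) = T.
Proof. by rewrite /socomp /soid mul1mx. Qed.

Lemma socompA m n k l (A : superop R k l) (B : superop R n k) (D : superop R m n) :
  socomp A (socomp B D) = socomp (socomp A B) D.
Proof. by rewrite /socomp mulmxA. Qed.

Lemma socompDl m n k (A B : superop R n k) (D : superop R m n) :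
  socomp (A + B) D = socomp A D + socomp B D.
Proof. by rewrite /socomp mulmxDr. Qed.
Lemma socompDr m n k (A : superop R n k) (B D : superop R m n) :
  socomp A (B + D) = socomp A B + socomp A D.
Proof. by rewrite /socomp mulmxDl. Qed.
Lemma socompZl m n k a (A : superop R n k) (D : superop R m n) :
  socomp (a *: A) D = a *: socomp A D.
Proof. by rewrite /socomp -scalemxAr. Qed.
Lemma socompZr m n k a (A : superop R n k) (D : superop R m n) :
  socomp A (a *: D) = a *: socomp A D.
Proof. by rewrite /socomp -scalemxAl. Qed.
Lemma socompNl m n k (A : superop R n k) (D : superop R m n) :
  socomp (- A) D = - socomp A D.
Proof. by rewrite /socomp mulmxN. Qed.
Lemma socompNr m n k (A : superop R n k) (D : superop R m n) :
  socomp A (- D) = - socomp A D.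
Proof. by rewrite /socomp mulNmx. Qed.
Lemma socompBl m n k (A B : superop R n k) (D : superop R m n) :
  socomp (A - B) D = socomp A D - socomp B D.
Proof. by rewrite socompDl socompNl. Qed.
Lemma socompBr m n k (A : superop R n k) (B D : superop R m n) :
  socomp A (B - D) = socomp A B - socomp A D.
Proof. by rewrite socompDr socompNr. Qed.

Lemma soapp_dephase n X : soapp (dephase R n) X = diag_mx (\row_i X i i).
Proof.
rewrite /soapp /dephase soapp_lin_mx // => a Y Z.
by apply/matrixP => i j; rewrite !mxE; case: (i == j); rewrite ?mulr1n ?mulr0n ?mulr1 ?mulr0 ?addr0.
Qed.

Lemma dephase_idem n : socomp (dephase R n) (dephase R n) = dephase R n.
Proof.
apply: superop_ext => X; rewrite soapp_comp !soapp_dephase.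
by apply/matrixP => i j; rewrite !mxE eqxx mulr1n.
Qed.

End P1.


Section P2.
Variable R : realType.
Local Notation C := (R[i]).

Lemma tensmxDZl m n p q a (A B : 'M[C]_(m, n)) (D : 'M[C]_(p, q)) :
  (a *: A + B) *t D = a *: (A *t D) + B *t D.
Proof. by apply/matrixP => i j; rewrite !mxE mulrDl mulrA. Qed.
Lemma tensmxDZr m n p q a (A : 'M[C]_(m, n)) (B D : 'M[C]_(p, q)) :
  A *t (a *: B + D) = a *: (A *t B) + A *t D.
Proof. by apply/matrixP => i j; rewrite !mxE mulrDr mulrCA. Qed.
Lemma tensmxDl m n p q (A B : 'M[C]_(m, n)) (D : 'M[C]_(p, q)) :
  (A + B) *t D = A *t D + B *t D.
Proof. by rewrite -[A]scale1r tensmxDZl !scale1r. Qed.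
Lemma tensmxDr m n p q (A : 'M[C]_(m, n)) (B D : 'M[C]_(p, q)) :
  A *t (B + D) = A *t B + A *t D.
Proof. by rewrite -[B]scale1r tensmxDZr !scale1r. Qed.
Lemma tensmxZl m n p q a (A : 'M[C]_(m, n)) (D : 'M[C]_(p, q)) :
  (a *: A) *t D = a *: (A *t D).
Proof. by rewrite -[_ *: A]addr0 tensmxDZl tens0mx addr0. Qed.
Lemma tensmxZr m n p q a (A : 'M[C]_(m, n)) (D : 'M[C]_(p, q)) :
  A *t (a *: D) = a *: (A *t D).
Proof. by rewrite -[_ *: D]addr0 tensmxDZr tensmx0 addr0. Qed.
Lemma tensmx_suml m n p q I (r : seq I) (P : pred I) (F : I -> 'M[C]_(m, n)) (D : 'M[C]_(p, q)) :
  (\sum_(i <- r | P i) F i) *t D = \sum_(i <- r | P i) (F i *t D).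
Proof. by apply: (big_morph (fun A => A *t D) (fun A B => tensmxDl A B D) (tens0mx D)). Qed.
Lemma tensmx_sumr m n p q I (r : seq I) (P : pred I) (F : I -> 'M[C]_(p, q)) (D : 'M[C]_(m, n)) :
  D *t (\sum_(i <- r | P i) F i) = \sum_(i <- r | P i) (D *t F i).
Proof. by apply: (big_morph (fun A => D *t A) (fun A B => tensmxDr D A B) (tensmx0 D)). Qed.

Lemma soapp_expand m n (T : superop R m n) X :
  soapp T X = \sum_(i < m) \sum_(j < m) X i j *: soapp T (delta_mx i j).
Proof.
rewrite {1}[X]matrix_sum_delta soapp_sum; apply: eq_bigr => i _.
by rewrite soapp_sum; apply: eq_bigr => j _; rewrite soappZ.
Qed.

Lemma soapp_sotensE m1 n1 m2 n2 (T1 : superop R m1 n1) (T2 : superop R m2 n2) X :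
  soapp (sotens T1 T2) X =
    \sum_(i < m1) \sum_(j < m1) \sum_(k < m2) \sum_(l < m2)
      X (mxtens_index (i, k)) (mxtens_index (j, l)) *:
        (soapp T1 (delta_mx i j) *t soapp T2 (delta_mx k l)).
Proof.
rewrite /soapp /sotens soapp_lin_mx // => a Y Z.
rewrite scaler_sumr -big_split; apply: eq_bigr => i _.
rewrite scaler_sumr -big_split; apply: eq_bigr => j _.
rewrite scaler_sumr -big_split; apply: eq_bigr => k _.
rewrite scaler_sumr -big_split; apply: eq_bigr => l _.
by rewrite !mxE scalerDl scalerA.
Qed.

Lemma soapp_sotens m1 n1 m2 n2 (T1 : superop R m1 n1) (T2 : superop R m2 n2) A B :
  soapp (sotens T1 T2) (A *t B) = soapp T1 A *t soapp T2 B.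
Proof.
rewrite soapp_sotensE [soapp T1 A]soapp_expand tensmx_suml.
apply: eq_bigr => i _; rewrite tensmx_suml; apply: eq_bigr => j _.
rewrite tensmxZl [soapp T2 B]soapp_expand tensmx_sumr scaler_sumr.
apply: eq_bigr => k _; rewrite tensmx_sumr scaler_sumr; apply: eq_bigr => l _.
by rewrite tensmxE tensmxZr scalerA.
Qed.

Lemma delta_tens m1 n1 m2 n2 (i : 'I_m1) (j : 'I_n1) (k : 'I_m2) (l : 'I_n2) :
  delta_mx (mxtens_index (i, k)) (mxtens_index (j, l)) = delta_mx i j *t delta_mx k l :> 'M[C]_(_, _).
Proof.
apply/matrixP => p q.
case: (mxtens_indexP p) => i' k'; case: (mxtens_indexP q) => j' l'.
rewrite tensmxE !mxE.
rewrite !(inj_eq (can_inj (@mxtens_indexK _ _))) !xpair_eqE.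
by case: (i' == i); case: (k' == k); case: (j' == j); case: (l' == l); rewrite /= ?mulr1 ?mulr0.
Qed.

Lemma superop_ext_tens m1 m2 n (T S : superop R (m1 * m2) n) :
  (forall i j k l, soapp T (delta_mx i j *t delta_mx k l) = soapp S (delta_mx i j *t delta_mx k l)) ->
  T = S.
Proof.
move=> H; apply: superop_ext => X.
rewrite (soapp_expand T) (soapp_expand S); apply: eq_bigr => p _; apply: eq_bigr => q _.
case: (mxtens_indexP p) => i k; case: (mxtens_indexP q) => j l.
by rewrite delta_tens H.
Qed.

Lemma sotens_comp m1 n1 k1 m2 n2 k2 (A1 : superop R n1 k1) (A2 : superop R m1 n1)
  (B1 : superop R n2 k2) (B2 : superop R m2 n2) :
  sotens (socomp A1 A2) (socomp B1 B2) = socomp (sotens A1 B1) (sotens A2 B2).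
Proof.
apply: superop_ext_tens => i j k l.
by rewrite soapp_comp !soapp_sotens !soapp_comp.
Qed.

Lemma sotensDZl m1 n1 m2 n2 a (A B : superop R m1 n1) (D : superop R m2 n2) :
  sotens (a *: A + B) D = a *: sotens A D + sotens B D.
Proof.
apply: superop_ext_tens => i j k l.
by rewrite soappTDZ !soapp_sotens soappTDZ tensmxDZl.
Qed.
Lemma sotensDZr m1 n1 m2 n2 a (A : superop R m1 n1) (B D : superop R m2 n2) :
  sotens A (a *: B + D) = a *: sotens A B + sotens A D.
Proof.
apply: superop_ext_tens => i j k l.
by rewrite soappTDZ !soapp_sotens soappTDZ tensmxDZr.
Qed.
Lemma sotensBl m1 n1 m2 n2 (A B : superop R m1 n1) (D : superop R m2 n2) :
  sotens (A - B) D = sotens A D - sotens B D.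
Proof. by rewrite (addrC A (-B)) -scaleN1r sotensDZl scaleN1r addrC. Qed.
Lemma sotensBr m1 n1 m2 n2 (A : superop R m1 n1) (B D : superop R m2 n2) :
  sotens A (B - D) = sotens A B - sotens A D.
Proof. by rewrite (addrC B (-D)) -scaleN1r sotensDZr scaleN1r addrC. Qed.

Lemma dephase_tens m k : dephase R (m * k) = sotens (dephase R m) (dephase R k).
Proof.
apply: superop_ext_tens => i j p q.
rewrite soapp_sotens !soapp_dephase.
apply/matrixP => x y.
case: (mxtens_indexP x) => i' p'; case: (mxtens_indexP y) => j' q'.
rewrite tensmxE !mxE !mxtens_indexK /=.
rewrite !(inj_eq (can_inj (@mxtens_indexK _ _))) !xpair_eqE.
case: (i' == i); case: (i' == j); case: (i' == j'); case: (p' == p); case: (p' == q); case: (p' == q');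
  by rewrite /= ?mulr1n ?mulr0n ?mulr0 ?mul0r ?mulr1.
Qed.

Lemma sotens_id m k : sotens (soid R m) (soid R k) = soid R (m * k).
Proof.
by apply: superop_ext_tens => i j p q; rewrite soapp_sotens !soapp_id.
Qed.

End P2.


Section P3.
Variable R : realType.
Local Notation C := (R[i]).

Definition quad n (x : 'cV[C]_n) (A : 'M[C]_n) : C :=
  ((map_mx Num.conj x)^T *m A *m x) 0 0.

Lemma quadE n (x : 'cV[C]_n) (A : 'M[C]_n) :
  quad x A = \sum_i \sum_j (Num.conj (x i 0)) * A i j * x j 0.
Proof.
rewrite /quad mxE; under eq_bigr => j _ do rewrite mxE mulr_suml.
rewrite exchange_big /=; apply: eq_bigr => i _; apply: eq_bigr => j _.
by rewrite !mxE.
Qed.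

Lemma quadD n (x : 'cV[C]_n) A B : quad x (A + B) = quad x A + quad x B.
Proof. by rewrite /quad mulmxDr mulmxDl mxE. Qed.

Lemma quadZ n (x : 'cV[C]_n) a A : quad x (a *: A) = a * quad x A.
Proof. by rewrite /quad -scalemxAr -scalemxAl mxE. Qed.

Lemma quad0 n (x : 'cV[C]_n) : quad x 0 = 0.
Proof. by rewrite /quad mulmx0 mul0mx mxE. Qed.

Lemma psdE n (A : 'M[C]_n) : psdmx A <-> forall x, 0 <= quad x A.
Proof. by []. Qed.

Lemma psd0 n : psdmx (0 : 'M[C]_n).
Proof. by move=> x; rewrite -/(quad x 0) quad0. Qed.

Lemma psdD n (A B : 'M[C]_n) : psdmx A -> psdmx B -> psdmx (A + B).
Proof.
by move=> pA pB x; rewrite -/(quad x _) quadD addr_ge0 //; [exact: pA | exact: pB].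
Qed.

Lemma psdZ n (a : C) (A : 'M[C]_n) : 0 <= a -> psdmx A -> psdmx (a *: A).
Proof. by move=> a0 pA x; rewrite -/(quad x _) quadZ mulr_ge0 //; exact: pA. Qed.

Lemma psd_sum n I (r : seq I) (P : pred I) (F : I -> 'M[C]_n) :
  (forall i, P i -> psdmx (F i)) -> psdmx (\sum_(i <- r | P i) F i).
Proof.
move=> H; elim/big_rec: _ => [|i A Pi pA]; first exact: psd0.
exact: psdD (H i Pi) pA.
Qed.

Definition reidx N M (s : 'I_N -> 'I_M) (Y : 'M[C]_M) : 'M[C]_N :=
  \matrix_(i, j) Y (s i) (s j).

Lemma psd_reidx N M (s : 'I_N -> 'I_M) t (st : cancel s t) (ts : cancel t s) Y :
  psdmx Y -> psdmx (reidx s Y).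
Proof.
move=> pY x; rewrite -/(quad x _).
have := pY (\col_p x (t p) 0); rewrite -/(quad _ _) !quadE.
have bs : bijective s by exists t.
rewrite (reindex s (onW_bij _ bs)) /=.
under eq_bigr => i _ do rewrite (reindex s (onW_bij _ bs)) /=.
congr (0 <= _); apply: eq_bigr => i _; apply: eq_bigr => j _.
by rewrite !mxE !st.
Qed.

Lemma reidxDZ N M (s : 'I_N -> 'I_M) a X Y :
  reidx s (a *: X + Y) = a *: reidx s X + reidx s Y.
Proof. by apply/matrixP => i j; rewrite !mxE. Qed.

Definition RI N M (s : 'I_N -> 'I_M) : superop R M N := lin_mx (reidx s).

Lemma soapp_RI N M (s : 'I_N -> 'I_M) X : soapp (RI s) X = reidx s X.
Proof. by rewrite /soapp /RI soapp_lin_mx // => *; exact: reidxDZ. Qed.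

Lemma reidx_delta N M (s : 'I_N -> 'I_M) t (st : cancel s t) (ts : cancel t s) P Q :
  reidx s (delta_mx P Q) = delta_mx (t P) (t Q).
Proof.
by apply/matrixP => i j; rewrite !mxE !(can2_eq st ts).
Qed.

Definition asc k a b (p : 'I_(k * (a * b))) : 'I_((k * a) * b) :=
  mxtens_index (mxtens_index ((mxtens_unindex p).1, (mxtens_unindex (mxtens_unindex p).2).1),
                (mxtens_unindex (mxtens_unindex p).2).2).
Definition asc' k a b (q : 'I_((k * a) * b)) : 'I_(k * (a * b)) :=
  mxtens_index ((mxtens_unindex (mxtens_unindex q).1).1,
                mxtens_index ((mxtens_unindex (mxtens_unindex q).1).2, (mxtens_unindex q).2)).

Lemma ascE k a b i u c :
  @asc k a b (mxtens_index (i, mxtens_index (u, c))) = mxtens_index (mxtens_index (i, u), c).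
Proof. by rewrite /asc !mxtens_indexK. Qed.
Lemma asc'E k a b i u c :
  @asc' k a b (mxtens_index (mxtens_index (i, u), c)) = mxtens_index (i, mxtens_index (u, c)).
Proof. by rewrite /asc' !mxtens_indexK. Qed.
Lemma ascK k a b : cancel (@asc k a b) (@asc' k a b).
Proof.
move=> p; case: (mxtens_indexP p) => i r; case: (mxtens_indexP r) => u c.
by rewrite ascE asc'E.
Qed.
Lemma asc'K k a b : cancel (@asc' k a b) (@asc k a b).
Proof.
move=> p; case: (mxtens_indexP p) => s c; case: (mxtens_indexP s) => i u.
by rewrite asc'E ascE.
Qed.

Definition sw k a b (p : 'I_(k * (a * b))) : 'I_((k * b) * a) :=
  mxtens_index (mxtens_index ((mxtens_unindex p).1, (mxtens_unindex (mxtens_unindex p).2).2),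
                (mxtens_unindex (mxtens_unindex p).2).1).
Definition sw' k a b (q : 'I_((k * b) * a)) : 'I_(k * (a * b)) :=
  mxtens_index ((mxtens_unindex (mxtens_unindex q).1).1,
                mxtens_index ((mxtens_unindex q).2, (mxtens_unindex (mxtens_unindex q).1).2)).

Lemma swE k a b i u c :
  @sw k a b (mxtens_index (i, mxtens_index (u, c))) = mxtens_index (mxtens_index (i, c), u).
Proof. by rewrite /sw !mxtens_indexK. Qed.
Lemma sw'E k a b i u c :
  @sw' k a b (mxtens_index (mxtens_index (i, c), u)) = mxtens_index (i, mxtens_index (u, c)).
Proof. by rewrite /sw' !mxtens_indexK. Qed.
Lemma swK k a b : cancel (@sw k a b) (@sw' k a b).
Proof.
move=> p; case: (mxtens_indexP p) => i r; case: (mxtens_indexP r) => u c.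
by rewrite swE sw'E.
Qed.
Lemma sw'K k a b : cancel (@sw' k a b) (@sw k a b).
Proof.
move=> p; case: (mxtens_indexP p) => s u; case: (mxtens_indexP s) => i c.
by rewrite sw'E swE.
Qed.

Definition one1 m (p : 'I_(1 * m)) : 'I_m := (mxtens_unindex p).2.
Definition one1' m (i : 'I_m) : 'I_(1 * m) := mxtens_index (ord0, i).
Lemma one1K m : cancel (@one1 m) (@one1' m).
Proof.
move=> p; case: (mxtens_indexP p) => i j.
by rewrite /one1 /one1' mxtens_indexK (ord1 i).
Qed.
Lemma one1'K m : cancel (@one1' m) (@one1 m).
Proof. by move=> i; rewrite /one1 /one1' mxtens_indexK. Qed.

End P3.


Section P4.
Variable R : realType.
Local Notation C := (R[i]).

Definition amp k m n (T : superop R m n) : superop R (k * m) (k * n) := sotens (soid R k) T.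

Lemma amp_comp k m n l (A : superop R n l) (B : superop R m n) :
  amp k (socomp A B) = socomp (amp k A) (amp k B).
Proof. by rewrite /amp -sotens_comp socomp_id_l. Qed.

Lemma pos_comp m n l (A : superop R n l) (B : superop R m n) :
  positive_map A -> positive_map B -> positive_map (socomp A B).
Proof. by move=> pA pB X pX; rewrite soapp_comp; apply: pA; apply: pB. Qed.

Lemma pos_RI N M (s : 'I_N -> 'I_M) t : cancel s t -> cancel t s -> positive_map (RI R s).
Proof. by move=> st ts X pX; rewrite soapp_RI; exact: (psd_reidx st ts). Qed.

Lemma reidx_asc' k a b (A : 'M[C]_k) (B : 'M[C]_a) (D : 'M[C]_b) :
  reidx (@asc' k a b) (A *t (B *t D)) = (A *t B) *t D.
Proof.
apply/matrixP => s t.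
case: (mxtens_indexP s) => s1 c; case: (mxtens_indexP s1) => i u.
case: (mxtens_indexP t) => t1 d; case: (mxtens_indexP t1) => j v.
by rewrite mxE !asc'E !tensmxE mulrA.
Qed.
Lemma reidx_asc k a b (A : 'M[C]_k) (B : 'M[C]_a) (D : 'M[C]_b) :
  reidx (@asc k a b) ((A *t B) *t D) = A *t (B *t D).
Proof.
apply/matrixP => s t.
case: (mxtens_indexP s) => i s1; case: (mxtens_indexP s1) => u c.
case: (mxtens_indexP t) => j t1; case: (mxtens_indexP t1) => v d.
by rewrite mxE !ascE !tensmxE mulrA.
Qed.
Lemma reidx_sw' k a b (A : 'M[C]_k) (B : 'M[C]_a) (D : 'M[C]_b) :
  reidx (@sw' k a b) (A *t (B *t D)) = (A *t D) *t B.
Proof.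
apply/matrixP => s t.
case: (mxtens_indexP s) => s1 u; case: (mxtens_indexP s1) => i c.
case: (mxtens_indexP t) => t1 v; case: (mxtens_indexP t1) => j d.
by rewrite mxE !sw'E !tensmxE mulrA mulrAC.
Qed.
Lemma reidx_sw k a b (A : 'M[C]_k) (B : 'M[C]_a) (D : 'M[C]_b) :
  reidx (@sw k a b) ((A *t D) *t B) = A *t (B *t D).
Proof.
apply/matrixP => s t.
case: (mxtens_indexP s) => i s1; case: (mxtens_indexP s1) => u c.
case: (mxtens_indexP t) => j t1; case: (mxtens_indexP t1) => v d.
by rewrite mxE !swE !tensmxE mulrA mulrAC.
Qed.

Lemma amp_idT k a p q (B : superop R p q) :
  amp k (sotens (soid R a) B) =
  socomp (RI R (@asc k a q)) (socomp (amp (k * a) B) (RI R (@asc' k a p))).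
Proof.
apply: superop_ext_tens => i j x y.
case: (mxtens_indexP x) => u c; case: (mxtens_indexP y) => v d.
rewrite delta_tens !soapp_comp !soapp_RI reidx_asc' /amp !soapp_sotens !soapp_id.
by rewrite reidx_asc.
Qed.

Lemma amp_Tid k b p q (A : superop R p q) :
  amp k (sotens A (soid R b)) =
  socomp (RI R (@sw k q b)) (socomp (amp (k * b) A) (RI R (@sw' k p b))).
Proof.
apply: superop_ext_tens => i j x y.
case: (mxtens_indexP x) => u c; case: (mxtens_indexP y) => v d.
rewrite delta_tens !soapp_comp !soapp_RI reidx_sw' /amp !soapp_sotens !soapp_id.
by rewrite reidx_sw.
Qed.

Lemma amp_one m n (T : superop R m n) :
  T = socomp (RI R (@one1' n)) (socomp (amp 1 T) (RI R (@one1 m))).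
Proof.
apply: superop_ext => X; rewrite !soapp_comp !soapp_RI.
have -> : reidx (@one1 m) X = (1%:M : 'M[C]_1) *t X.
  apply/matrixP => s t.
  case: (mxtens_indexP s) => i u; case: (mxtens_indexP t) => j v.
  by rewrite mxE tensmxE /one1 !mxtens_indexK (ord1 i) (ord1 j) mxE mul1r.
rewrite /amp soapp_sotens soapp_id.
apply/matrixP => s t.
by rewrite [RHS]mxE /one1' tensmxE [1%:M _ _]mxE eqxx mulr1n mul1r.
Qed.

Lemma CP_pos m n (T : superop R m n) : completely_positive T -> positive_map T.
Proof.
move=> cp; rewrite (amp_one T).
apply: pos_comp; first exact: (pos_RI (@one1'K n) (@one1K n)).
apply: pos_comp; first exact: cp.
exact: (pos_RI (@one1K m) (@one1'K m)).
Qed.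

Lemma CP_comp m n l (A : superop R n l) (B : superop R m n) :
  completely_positive A -> completely_positive B -> completely_positive (socomp A B).
Proof. by move=> cA cB k; rewrite -/(amp k _) amp_comp; apply: pos_comp. Qed.

Lemma CP_tens m1 n1 m2 n2 (A : superop R m1 n1) (B : superop R m2 n2) :
  completely_positive A -> completely_positive B -> completely_positive (sotens A B).
Proof.
move=> cA cB k.
have -> : sotens A B = socomp (sotens A (soid R n2)) (sotens (soid R m1) B).
  by rewrite -sotens_comp socomp_id_l socomp_id_r.
rewrite -/(amp k _) amp_comp; apply: pos_comp.
  rewrite amp_Tid; apply: pos_comp; first exact: (pos_RI (@swK _ _ _) (@sw'K _ _ _)).
  apply: pos_comp; first exact: cA.
  exact: (pos_RI (@sw'K _ _ _) (@swK _ _ _)).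
rewrite amp_idT; apply: pos_comp; first exact: (pos_RI (@ascK _ _ _) (@asc'K _ _ _)).
apply: pos_comp; first exact: cB.
exact: (pos_RI (@asc'K _ _ _) (@ascK _ _ _)).
Qed.

End P4.


Section P5.
Variable R : realType.
Local Notation C := (R[i]).

Lemma tr_tens m n (A : 'M[C]_m) (B : 'M[C]_n) : \tr (A *t B) = \tr A * \tr B.
Proof. by rewrite /mxtrace mulr_sum; apply: eq_bigr => p _; rewrite mxE. Qed.

Lemma tr_sum n I (r : seq I) (P : pred I) (F : I -> 'M[C]_n) :
  \tr (\sum_(i <- r | P i) F i) = \sum_(i <- r | P i) \tr (F i).
Proof. exact: (big_morph _ (@mxtraceD _ _) (@mxtrace0 _ _)). Qed.

Lemma TP_basis m1 m2 n (T : superop R (m1 * m2) n) :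
  (forall i j k l, \tr (soapp T (delta_mx i j *t delta_mx k l)) =
                   \tr (delta_mx i j *t delta_mx k l : 'M[C]_(m1 * m2))) ->
  trace_preserving T.
Proof.
move=> H X; rewrite soapp_expand {2}[X]matrix_sum_delta !tr_sum.
apply: eq_bigr => p _; rewrite !tr_sum; apply: eq_bigr => q _.
rewrite !mxtraceZ.
case: (mxtens_indexP p) => i k; case: (mxtens_indexP q) => j l.
by rewrite delta_tens H.
Qed.

Lemma TP_tens m1 n1 m2 n2 (A : superop R m1 n1) (B : superop R m2 n2) :
  trace_preserving A -> trace_preserving B -> trace_preserving (sotens A B).
Proof.
by move=> tA tB; apply: TP_basis => i j k l; rewrite soapp_sotens !tr_tens tA tB.
Qed.

Lemma TP_comp m n l (A : superop R n l) (B : superop R m n) :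
  trace_preserving A -> trace_preserving B -> trace_preserving (socomp A B).
Proof. by move=> tA tB X; rewrite soapp_comp tA tB. Qed.

Lemma TP_dephase n : trace_preserving (dephase R n).
Proof.
by move=> X; rewrite soapp_dephase mxtrace_diag; apply: eq_bigr => j _; rewrite mxE.
Qed.

Lemma psd_diag_sandwich N (d : 'rV[C]_N) (X : 'M[C]_N) :
  (forall j, Num.conj (d 0 j) = d 0 j) -> psdmx X ->
  psdmx (diag_mx d *m X *m diag_mx d).
Proof.
move=> dr pX x; rewrite -/(quad x _).
have -> : quad x (diag_mx d *m X *m diag_mx d) = quad (diag_mx d *m x) X.
  rewrite /quad; congr (_ 0 0).
  have -> : (map_mx Num.conj (diag_mx d *m x))^T = (map_mx Num.conj x)^T *m diag_mx d.
    apply/matrixP => i j; rewrite mul_diag_mx mul_mx_diag !mxE.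
    by rewrite rmorphM /= dr mulrC.
  by rewrite !mulmxA.
exact: pX.
Qed.

Definition Dm k n (c : 'I_n) : 'M[C]_(k * n) :=
  diag_mx (\row_p ((mxtens_unindex p).2 == c)%:R).

Lemma sum_two_delta n (a b : 'I_n) (Z : C) :
  \sum_c ((a == c)%:R * Z * (b == c)%:R) = Z *+ (a == b).
Proof.
rewrite (bigD1 a) //= big1 => [|c /negbTE nac]; last by rewrite (eq_sym a c) nac !mul0r.
by rewrite eqxx mul1r addr0 eq_sym; case: (a == b); rewrite ?mulr1 ?mulr0.
Qed.

End P5.


Section P6.
Variable R : realType.
Local Notation C := (R[i]).

Lemma amp_dephase k n X :
  soapp (amp k (dephase R n)) X = \sum_c (Dm R k c *m X *m Dm R k c).
Proof.
pose g := fun Y : 'M[C]_(k * n) => \sum_c (Dm R k c *m Y *m Dm R k c).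
have lin : forall a Y Z, g (a *: Y + Z) = a *: g Y + g Z.
  move=> a Y Z; rewrite /g scaler_sumr -big_split; apply: eq_bigr => c _.
  by rewrite mulmxDr mulmxDl -scalemxAr -scalemxAl.
have -> : amp k (dephase R n) = lin_mx g.
  apply: superop_ext_tens => i j p q.
  rewrite {2}/soapp soapp_lin_mx // /amp soapp_sotens soapp_id soapp_dephase.
  apply/matrixP => x y; rewrite /g summxE.
  case: (mxtens_indexP x) => i' p'; case: (mxtens_indexP y) => j' q'.
  under eq_bigr => c _ do rewrite mul_mx_diag mul_diag_mx !mxE !mxtens_indexK /=.
  rewrite !mxE !mxtens_indexK /= sum_two_delta.
  by have [<-|_] := eqVneq p' q'; rewrite ?mulr1n ?mulr0n ?mulr0.
by rewrite /soapp soapp_lin_mx.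
Qed.

Lemma CP_dephase n : completely_positive (dephase R n).
Proof.
move=> k X pX; rewrite -/(amp k _) amp_dephase.
apply: psd_sum => c _; apply: psd_diag_sandwich => // j.
by rewrite mxE; case: (_ == _); rewrite ?conjC0 ?conjC1.
Qed.

Lemma quantum_dephase n : quantum_op (dephase R n).
Proof. by split; [exact: CP_dephase | exact: TP_dephase]. Qed.

Lemma quantum_comp m n l (A : superop R n l) (B : superop R m n) :
  quantum_op A -> quantum_op B -> quantum_op (socomp A B).
Proof.
by move=> [cA tA] [cB tB]; split; [exact: CP_comp | exact: TP_comp].
Qed.

Lemma quantum_tens m1 n1 m2 n2 (A : superop R m1 n1) (B : superop R m2 n2) :
  quantum_op A -> quantum_op B -> quantum_op (sotens A B).
Proof.
by move=> [cA tA] [cB tB]; split; [exact: CP_tens | exact: TP_tens].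
Qed.

Lemma sotens0r m1 n1 m2 n2 (A : superop R m1 n1) : sotens A (0 : superop R m2 n2) = 0.
Proof.
by apply: superop_ext_tens => i j k l; rewrite soapp_sotens !soappT0 tensmx0.
Qed.

Lemma sotensZr m1 n1 m2 n2 a (A : superop R m1 n1) (B : superop R m2 n2) :
  sotens A (a *: B) = a *: sotens A B.
Proof. by rewrite -[a *: B]addr0 sotensDZr sotens0r addr0. Qed.

Lemma sotensDr m1 n1 m2 n2 (A : superop R m1 n1) (B D : superop R m2 n2) :
  sotens A (B + D) = sotens A B + sotens A D.
Proof. by rewrite -[B]scale1r sotensDZr !scale1r. Qed.

Lemma quantum_conv m n (T S : superop R m n) (t : R) :
  0 <= t <= 1 -> quantum_op T -> quantum_op S ->
  quantum_op (t%:C%C *: T + (1 - t)%:C%C *: S).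
Proof.
move=> /andP[t0 t1] [cT tT] [cS tS]; split.
  move=> k X pX; rewrite -/(amp k _) /amp sotensDr !sotensZr soappTD !soappTZ.
  apply: psdD; apply: psdZ.
  - by rewrite lecR.
  - exact: cT.
  - by rewrite lecR subr_ge0.
  - exact: cS.
move=> X; rewrite soappTD !soappTZ raddfD /= !mxtraceZ tT tS -mulrDl.
by rewrite -rmorphD /= addrC subrK mul1r.
Qed.

Local Notation D := (dephase R).

Lemma DI_comp m n l (A : superop R n l) (B : superop R m n) :
  DI A -> DI B -> DI (socomp A B).
Proof.
move=> [qA eA] [qB eB]; split; first exact: quantum_comp.
have H : socomp (D l) (socomp A B) = socomp (socomp (D l) A) (socomp (D n) B).
  by rewrite [LHS]socompA [in LHS]eA -socompA.
by rewrite [LHS]H [in LHS]eB H [LHS]socompA.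
Qed.

Lemma DI_dephase n : DI (D n).
Proof. by split; [exact: quantum_dephase | rewrite !dephase_idem]. Qed.

Lemma DI_DP m n (P : superop R m n) : DI P -> DI (socomp (D n) P).
Proof. by move=> dP; apply: DI_comp => //; exact: DI_dephase. Qed.

Lemma DI_sandwich m n (T : superop R m n) : quantum_op T -> DI (socomp (D n) (socomp T (D m))).
Proof.
move=> qT; split.
  by apply: quantum_comp; [exact: quantum_dephase | apply: quantum_comp => //; exact: quantum_dephase].
by rewrite !socompA dephase_idem -!socompA dephase_idem.
Qed.

Lemma DI_tens m1 n1 m2 n2 (A : superop R m1 n1) (B : superop R m2 n2) :
  DI A -> DI B -> DI (sotens A B).
Proof.
move=> [qA eA] [qB eB]; split; first exact: quantum_tens.
by rewrite !dephase_tens -!sotens_comp -eA -eB.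
Qed.

Lemma DI_conv m n (T S : superop R m n) (t : R) :
  0 <= t <= 1 -> DI T -> DI S -> DI (t%:C%C *: T + (1 - t)%:C%C *: S).
Proof.
move=> ht [qT eT] [qS eS]; split; first exact: quantum_conv.
by rewrite socompDr !socompZr socompDl !socompZl -eT -eS.
Qed.


End P6.

Import boolp classical_sets reals.
Import ring lra.


Section P7.
Variable R : realType.
Local Notation C := (R[i]).

Lemma qspan0 m n : in_qspan (0 : superop R m n).
Proof. exists 0%N, (fun _ => 0), (fun _ => 0); split; first by case. by rewrite big_ord0. Qed.

Lemma qspanQ m n (P : superop R m n) : quantum_op P -> in_qspan P.
Proof.
move=> qP; exists 1%N, (fun _ => 1), (fun _ => P); split => // .
by rewrite big_ord1 scale1r.
Qed.

Lemma qspanZ m n a (X : superop R m n) : in_qspan X -> in_qspan (a *: X).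
Proof.
move=> [k [c [P [qP ->]]]]; exists k, (fun i => a * c i), P; split => //.
by rewrite scaler_sumr; apply: eq_bigr => i _; rewrite scalerA.
Qed.

Lemma qspanD m n (X Y : superop R m n) : in_qspan X -> in_qspan Y -> in_qspan (X + Y).
Proof.
move=> [k1 [c1 [P1 [q1 ->]]]] [k2 [c2 [P2 [q2 ->]]]].
exists (k1 + k2)%N, (fun i => match split i with inl j => c1 j | inr j => c2 j end),
  (fun i => match split i with inl j => P1 j | inr j => P2 j end); split.
  by move=> i; case: (split i).
rewrite big_split_ord /=; congr (_ + _); apply: eq_bigr => i _.
  by rewrite (unsplitK (inl _ i)).
by rewrite (unsplitK (inr _ i)).
Qed.

Lemma qspanN m n (X : superop R m n) : in_qspan X -> in_qspan (- X).
Proof. by move=> qX; rewrite -scaleN1r; apply: qspanZ. Qed.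

Lemma qspanB m n (X Y : superop R m n) : in_qspan X -> in_qspan Y -> in_qspan (X - Y).
Proof. by move=> qX qY; apply: qspanD => //; apply: qspanN. Qed.

Lemma qspan_sum m n I (r : seq I) (P : pred I) (F : I -> superop R m n) :
  (forall i, P i -> in_qspan (F i)) -> in_qspan (\sum_(i <- r | P i) F i).
Proof.
move=> H; elim/big_rec: _ => [|i A Pi qA]; first exact: qspan0.
exact: qspanD (H i Pi) qA.
Qed.

Section Norm.
Variables (m n : nat) (nrm : superop R m n -> R) (Hn : norm_on_qspan nrm).

Lemma nrm_ge0 X : in_qspan X -> 0 <= nrm X.
Proof. by case: Hn => H _; apply: H. Qed.

Lemma nrmZ a X : in_qspan X -> nrm (a *: X) = Normc.normc a * nrm X.
Proof. by case: Hn => _ [_ [H _]]; apply: H. Qed.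

Lemma nrmD X Y : in_qspan X -> in_qspan Y -> nrm (X + Y) <= nrm X + nrm Y.
Proof. by case: Hn => _ [_ [_ H]]; apply: H. Qed.

Lemma nrm_eq0 X : in_qspan X -> nrm X = 0 -> X = 0.
Proof. by case: Hn => _ [H _]; apply: H. Qed.

Lemma nrm0 : nrm 0 = 0.
Proof.
have n0 : Normc.normc (0 : C) = 0 := Normc.normc0 _.
rewrite -(scale0r (0 : superop R m n)) nrmZ; last exact: qspan0.
by rewrite (_ : Normc.normc _ = 0) ?mul0r.
Qed.

Lemma normcN1 : Normc.normc (-1 : C) = 1.
Proof. rewrite -(Normc.normc1 R); exact: (@normcN R 1). Qed.

Lemma nrmN X : in_qspan X -> nrm (- X) = nrm X.
Proof. by move=> qX; rewrite -scaleN1r nrmZ // normcN1 mul1r. Qed.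

Lemma nrmB_sym X Y : in_qspan X -> in_qspan Y -> nrm (X - Y) = nrm (Y - X).
Proof. by move=> qX qY; rewrite -opprB nrmN //; apply: qspanB. Qed.

Lemma nrm_rev X Y : in_qspan X -> in_qspan Y -> nrm X - nrm Y <= nrm (X - Y).
Proof.
move=> qX qY; rewrite lerBlDr.
by rewrite -{1}(subrK Y X); apply: nrmD => //; apply: qspanB.
Qed.

Lemma nrm_sum_le k (c : 'I_k -> C) (F : 'I_k -> superop R m n) :
  (forall i, in_qspan (F i)) ->
  nrm (\sum_i c i *: F i) <= \sum_i Normc.normc (c i) * nrm (F i).
Proof.
move=> qF.
pose K := fun (X : superop R m n) (y : R) => in_qspan X /\ nrm X <= y.
suff [] : K (\sum_i c i *: F i) (\sum_i Normc.normc (c i) * nrm (F i)) by [].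
apply: (big_rec2 K); first by split; [exact: qspan0 | rewrite nrm0].
move=> i X y _ [qX le]; split; first by apply: qspanD => //; apply: qspanZ.
apply: le_trans (nrmD _ _) _; [exact: qspanZ | by [] |].
by rewrite nrmZ // lerD2l.
Qed.

End Norm.

End P7.


Section P8.
Variable R : realType.
Local Notation C := (R[i]).

Definition goodr m n d := exists r (M : 'M[C]_(r, m * m * (n * n))),
  (forall i, quantum_op (vec_mx (row i M) : superop R m n)) /\ \rank M = d.

Lemma row0_rV N (v : 'rV[C]_N) : row 0 v = v.
Proof. by apply/matrixP => i j; rewrite !mxE (ord1 i). Qed.

Lemma qspan_basis m n : exists r (M : 'M[C]_(r, m * m * (n * n))),
  (forall i, quantum_op (vec_mx (row i M) : superop R m n)) /\
  (forall X : superop R m n, in_qspan X -> (mxvec X <= M)%MS).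
Proof.
pose P := fun d => `[< goodr m n d >].
have exP : exists d, P d.
  exists 0%N; apply/asboolP; exists 0%N, 0; split; first by case.
  by rewrite mxrank0.
have ubP : forall d, P d -> (d <= m * m * (n * n))%N.
  by move=> d /asboolP [r [M [_ <-]]]; exact: rank_leq_col.
case: (ex_maxnP exP ubP) => d /asboolP [r [M [qM rM]]] maxd.
exists r, M; split => //.
have Qin : forall Q : superop R m n, quantum_op Q -> (mxvec Q <= M)%MS.
  move=> Q qQ; pose M' := col_mx M (mxvec Q).
  have qM' : forall i, quantum_op (vec_mx (row i M') : superop R m n).
    by move=> i; case: (split_ordP i) => j ->; rewrite ?rowKu ?rowKd // (ord1 j) row0_rV mxvecK.
  have sub : (M <= M')%MS.
    by apply/row_subP => i; rewrite -(rowKu i M (mxvec Q)) row_sub.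
  have le : (\rank M' <= d)%N.
    by apply: maxd; apply/asboolP; exists (r + 1)%N, M'.
  have [_] := mxrank_leqif_sup sub.
  rewrite eqn_leq (mxrankS sub) rM le /= => /esym sM'.
  apply: submx_trans sM'.
  by rewrite -(row0_rV (mxvec Q)) -(rowKd 0 M (mxvec Q)) row_sub.
move=> X [k [c [Q [qQ ->]]]].
rewrite linear_sum; apply: summx_sub => i _.
by rewrite linearZ; apply: scalemx_sub; apply: Qin.
Qed.

Lemma qspan_decomp m n r (M : 'M[C]_(r, m * m * (n * n))) (X : superop R m n) :
  (mxvec X <= M)%MS ->
  X = \sum_i (mxvec X *m pinvmx M) 0 i *: (vec_mx (row i M) : superop R m n).
Proof.
move=> sX; rewrite -{1}(mxvecK X) -{1}(mulmxKpV sX) mulmx_sum_row linear_sum.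
by apply: eq_bigr => i _; rewrite linearZ.
Qed.

End P8.

Section S.
Variable R : realType.
Local Notation C := (R[i]).
Local Notation cRe := (@complex.Re R).
Local Notation cIm := (@complex.Im R).
Lemma ReD (x y : C) : cRe (x + y) = cRe x + cRe y.
Proof. by case: x => a b; case: y => c d. Qed.
Lemma ImD (x y : C) : cIm (x + y) = cIm x + cIm y.
Proof. by case: x => a b; case: y => c d. Qed.
Lemma ReM (x y : C) : cRe (x * y) = cRe x * cRe y - cIm x * cIm y.
Proof. by case: x => a b; case: y => c d. Qed.
Lemma ImM (x y : C) : cIm (x * y) = cRe x * cIm y + cIm x * cRe y.
Proof. by case: x => a b; case: y => c d. Qed.
Lemma ReN (x : C) : cRe (- x) = - cRe x.
Proof. by case: x. Qed.
Lemma ImN (x : C) : cIm (- x) = - cIm x.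
Proof. by case: x. Qed.
Lemma Rei : cRe ('i%C : C) = 0. Proof. by []. Qed.
Lemma Imi : cIm ('i%C : C) = 1. Proof. by []. Qed.
Lemma Re1 : cRe (1 : C) = 1. Proof. by []. Qed.
Lemma Im1 : cIm (1 : C) = 0. Proof. by []. Qed.
Lemma Re0 : cRe (0 : C) = 0. Proof. by []. Qed.
Lemma Im0 : cIm (0 : C) = 0. Proof. by []. Qed.
Lemma ReR (a : R) : cRe (a%:C%C : C) = a. Proof. by []. Qed.
Lemma ImR (a : R) : cIm (a%:C%C : C) = 0. Proof. by []. Qed.
Lemma ge0E (z : C) : (0 <= z) = (cIm z == 0) && (0 <= cRe z).
Proof. by rewrite lecE. Qed.
Lemma conjRe (z : C) : cRe (Num.conj z) = cRe z. Proof. by case: z. Qed.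
Lemma conjIm (z : C) : cIm (Num.conj z) = - cIm z. Proof. by case: z. Qed.
Lemma Re_sum I (r : seq I) (P : pred I) (F : I -> C) : cRe (\sum_(i <- r | P i) F i) = \sum_(i <- r | P i) cRe (F i).
Proof. by apply: (big_morph _ ReD). Qed.

Lemma sum_delta_r n (F : 'I_n -> C) c : \sum_j F j * (j == c)%:R = F c.
Proof.
rewrite (bigD1 c) //= eqxx mulr1 big1 ?addr0 // => j /negbTE ->; by rewrite mulr0.
Qed.
Lemma sum_delta_l n (F : 'I_n -> C) c : \sum_j (j == c)%:R * F j = F c.
Proof.
rewrite (bigD1 c) //= eqxx mul1r big1 ?addr0 // => j /negbTE ->; by rewrite mul0r.
Qed.

Lemma conj_nat (b : bool) : Num.conj (b%:R : C) = b%:R.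
Proof. by case: b; rewrite ?conjC0 ?conjC1. Qed.

Lemma quad_two N (rho : 'M[C]_N) c d (al : C) :
  quad (delta_mx c 0 + al *: delta_mx d 0) rho =
  rho c c + al * rho c d + Num.conj al * rho d c + Num.conj al * al * rho d d.
Proof.
rewrite quadE.
have xE : forall i, (delta_mx c 0 + al *: delta_mx d 0 : 'cV[C]_N) i 0 =
    (i == c)%:R + al * (i == d)%:R.
  by move=> i; rewrite !mxE eqxx !andbT.
under eq_bigr => i _ do under eq_bigr => j _ do rewrite !xE.
have inner : forall (A : C) i, \sum_j A * rho i j * ((j == c)%:R + al * (j == d)%:R)
    = A * (rho i c + al * rho i d).
  move=> A i.
  transitivity (\sum_j (A * (rho i j * (j == c)%:R) + (A * al) * (rho i j * (j == d)%:R))).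
    by apply: eq_bigr => j _; ring.
  by rewrite big_split /= -!mulr_sumr !sum_delta_r; ring.
under eq_bigr => i _ do rewrite inner rmorphD rmorphM /= !conj_nat.
transitivity (\sum_i ((i == c)%:R * (rho i c + al * rho i d) +
    Num.conj al * ((i == d)%:R * (rho i c + al * rho i d)))).
  by apply: eq_bigr => i _; ring.
rewrite big_split /= -mulr_sumr !sum_delta_l; ring.
Qed.

Lemma psd_entry_bound N (rho : 'M[C]_N) : psdmx rho -> forall p q,
  `|cRe (rho p q)| <= cRe (\tr rho) /\ `|cIm (rho p q)| <= cRe (\tr rho).
Proof.
move=> pr p q.
have h : forall al, 0 <= quad (delta_mx p 0 + al *: delta_mx q 0) rho by move=> al; exact: pr.
have diag : forall c, cIm (rho c c) = 0 /\ 0 <= cRe (rho c c).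
  move=> c; have := pr (delta_mx c 0 + 0 *: delta_mx c 0).
  rewrite -/(quad _ _) quad_two rmorph0 !mul0r !addr0 ge0E => /andP[/eqP -> ->] //.
have trb : forall c, cRe (rho c c) <= cRe (\tr rho).
  move=> c; rewrite /mxtrace Re_sum (bigD1 c) //= lerDl.
  by apply: sumr_ge0 => i _; exact: (diag i).2.
have [dp1 dp2] := diag p; have [dq1 dq2] := diag q.
have tp := trb p; have tq := trb q.
have := h 1; have := h (-1); have := h 'i%C; have := h (- 'i%C).
rewrite !quad_two !ge0E.
rewrite !(ReD, ImD, ReM, ImM, ReN, ImN, conjRe, conjIm, Re1, Im1, Rei, Imi).
move=> /andP[/eqP e1 i1] /andP[/eqP e2 i2] /andP[/eqP e3 i3] /andP[/eqP e4 i4].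
rewrite !ler_norml; split; apply/andP; split; lra.
Qed.

End S.

Section P11.
Variable R : realType.
Local Notation C := (R[i]).
Local Notation cRe := (@complex.Re R).
Local Notation cIm := (@complex.Im R).

Lemma psd_outer N (w : 'cV[C]_N) : psdmx (w *m (map_mx Num.conj w)^T).
Proof.
move=> x; rewrite -/(quad _ _) /quad !mulmxA -[_ *m w *m _ *m x]mulmxA.
set s := ((map_mx Num.conj x)^T *m w) 0 0.
have -> : ((map_mx Num.conj x)^T *m w *m ((map_mx Num.conj w)^T *m x)) 0 0 =
   s * ((map_mx Num.conj w)^T *m x) 0 0.
  by rewrite mxE big_ord1.
have -> : ((map_mx Num.conj w)^T *m x) 0 0 = Num.conj s.
  rewrite /s !mxE rmorph_sum; apply: eq_bigr => i _.
  by rewrite !mxE rmorphM /= conjCK mulrC.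
exact: mulcJ_ge0.
Qed.

Lemma tr_delta n (a b : 'I_n) : \tr (delta_mx a b : 'M[C]_n) = (a == b)%:R.
Proof.
rewrite /mxtrace (bigD1 a) //= big1 => [|i /negbTE nia]; last by rewrite !mxE nia.
by rewrite !mxE eqxx addr0.
Qed.

Lemma ReN_nat k : cRe (k%:R : C) = k%:R.
Proof. by rewrite -(rmorph_nat (real_complex R)). Qed.

Definition Omega m : 'M[C]_(m * m) := \sum_a \sum_b (delta_mx a b *t delta_mx a b).

Lemma psd_Omega m : psdmx (Omega m).
Proof.
pose w : 'cV[C]_(m * m) := \sum_a delta_mx (mxtens_index (a, a)) 0.
have wc : map_mx Num.conj w = w.
  apply/matrixP => i j; rewrite !mxE !summxE rmorph_sum; apply: eq_bigr => a _.
  by rewrite !mxE rmorph_nat.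
have -> : Omega m = w *m (map_mx Num.conj w)^T.
  rewrite wc /w linear_sum /= mulmx_suml; apply: eq_bigr => a _.
  rewrite mulmx_sumr; apply: eq_bigr => b _.
  by rewrite trmx_delta mul_delta_mx delta_tens.
exact: psd_outer.
Qed.

Lemma tr_Omega m : \tr (Omega m) = m%:R.
Proof.
rewrite /Omega tr_sum.
transitivity (\sum_(a < m) (1 : C)); last by rewrite sumr_const card_ord.
apply: eq_bigr => a _; rewrite tr_sum.
under eq_bigr => b _ do rewrite tr_tens !tr_delta -natrM mulnb andbb.
by rewrite (bigD1 a) //= eqxx big1 ?addr0 // => b /negbTE; rewrite eq_sym => ->.
Qed.

Lemma choi_entry m n (P : superop R m n) a b c d :
  soapp (amp m P) (Omega m) (mxtens_index (a, c)) (mxtens_index (b, d)) =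
  soapp P (delta_mx a b) c d.
Proof.
have -> : soapp (amp m P) (Omega m) = \sum_a' \sum_b' (delta_mx a' b' *t soapp P (delta_mx a' b')).
  rewrite /Omega soapp_sum; apply: eq_bigr => a' _; rewrite soapp_sum; apply: eq_bigr => b' _.
  by rewrite /amp soapp_sotens soapp_id.
rewrite summxE; under eq_bigr => a' _ do (rewrite summxE; under eq_bigr => b' _ do rewrite tensmxE mxE).
rewrite (bigD1 a) //= [X in _ + X]big1 => [|a' /negbTE na']; last first.
  by rewrite big1 // => b' _; rewrite eq_sym na' mul0r.
rewrite addr0 eqxx (bigD1 b) //= [X in _ + X]big1 => [|b' /negbTE nb']; last first.
  by rewrite (eq_sym b) nb' mul0r.
by rewrite eqxx addr0 mul1r.
Qed.

Lemma quantum_entry_bound m n (P : superop R m n) : quantum_op P -> forall a b c d,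
  `|cRe (soapp P (delta_mx a b) c d)| <= m%:R /\ `|cIm (soapp P (delta_mx a b) c d)| <= m%:R.
Proof.
move=> [cP tP] a b c d.
have pJ : psdmx (soapp (amp m P) (Omega m)) by apply: cP; exact: psd_Omega.
have trJ : \tr (soapp (amp m P) (Omega m)) = m%:R.
  rewrite (TP_tens (A := soid R m) (B := P)) ?tr_Omega // => X.
  by rewrite soapp_id.
have := psd_entry_bound pJ (mxtens_index (a, c)) (mxtens_index (b, d)).
by rewrite choi_entry trJ ReN_nat.
Qed.

End P11.

Module Ana.
Import boolp classical_sets reals topology normedtype derive.
Import ring lra.
Import numFieldNormedType.Exports.
Import Num.Def.
Local Open Scope classical_set_scope.


Section P9.
Variable R : realType.

Lemma coord_le_norm N (v : 'rV[R]_N) i : `|v 0 i| <= `|v|.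
Proof.
rewrite [leRHS]/normr /= mx_normrE.
by apply/bigmax_geP; right; exists (0, i).
Qed.

Lemma rlin_bound N (g : 'rV[R]_N -> R) :
  (forall a v w, g (a *: v + w) = a * g v + g w) ->
  exists K, 0 <= K /\ forall v, `|g v| <= K * `|v|.
Proof.
move=> gl.
have g0 : g 0 = 0.
  have h := gl 1 0 0; rewrite scale1r addr0 mul1r in h.
  by apply: (addrI (g 0)); rewrite addr0 -h.
have gD : forall v w, g (v + w) = g v + g w.
  by move=> v w; have := gl 1 v w; rewrite scale1r mul1r.
exists (\sum_i `|g (delta_mx 0 i)|); split; first by apply: sumr_ge0 => i _.
move=> v.
have -> : g v = \sum_i v 0 i * g (delta_mx 0 i).
  rewrite {1}[v]row_sum_delta.
  elim/big_rec2: _ => [//|i y w _ <-].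
  by rewrite gl.
rewrite mulr_suml; apply: le_trans (ler_norm_sum _ _ _) _.
apply: ler_sum => i _; rewrite normrM mulrC ler_wpM2l //.
exact: coord_le_norm.
Qed.

Lemma lip_cont N (f : 'rV[R]_N -> R) K : 0 <= K ->
  (forall v w, `|f v - f w| <= K * `|v - w|) -> continuous f.
Proof.
move=> K0 Hf v P /= /nbhs_normP [e /= e0 HP].
apply/nbhs_ballP; exists (e / (K + 1)) => /=.
  by rewrite divr_gt0 // ltr_wpDl.
move=> w; rewrite mx_norm_ball /= => vw; apply: HP => /=.
apply: le_lt_trans (Hf v w) _.
have K1 : 0 < K + 1 by rewrite ltr_wpDl.
apply: le_lt_trans (_ : K * (e / (K + 1)) < e).
  by rewrite ler_wpM2l // ltW.
by rewrite mulrA ltr_pdivrMr // [K * e]mulrC ltr_pM2l // ltrDl ltr01.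
Qed.

Lemma closed_forall (T : topologicalType) I (S : I -> set T) :
  (forall i, closed (S i)) -> closed [set x | forall i, S i x].
Proof.
move=> H; have -> : [set x | forall i, S i x] = \bigcap_(i in setT) S i.
  by apply/seteqP; split => x /= Hx i //; apply: Hx.
exact: closed_bigI.
Qed.

Lemma closed_imp (T : topologicalType) (P : Prop) (S : set T) :
  (P -> closed S) -> closed [set x | P -> S x].
Proof.
move=> H; case: (pselect P) => p.
  have -> : [set x | P -> S x] = S by apply/seteqP; split => x /= Hx //; apply: Hx.
  exact: H.
have -> : [set x | P -> S x] = setT by apply/seteqP; split => x //= _.
exact: closedT.
Qed.

Lemma closed_and (T : topologicalType) (S1 S2 : set T) :
  closed S1 -> closed S2 -> closed [set x | S1 x /\ S2 x].
Proof. exact: closedI. Qed.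

Lemma closed_lin_ge N (g : 'rV[R]_N -> R) :
  (forall a v w, g (a *: v + w) = a * g v + g w) -> closed [set v | 0 <= g v].
Proof.
move=> gl; have [K [K0 HK]] := rlin_bound gl.
have cg : continuous g.
  apply: (lip_cont K0) => v w.
  have -> : g v - g w = g (v - w).
    by have := gl (-1) w v; rewrite scaleN1r mulN1r (addrC (- w)) (addrC (- g w)) => ->.
  exact: HK.
have -> : [set v | 0 <= g v] = g @^-1` [set x | 0 <= x] by [].
by apply: preimage_closed; [move=> x _; exact: cg | exact: closed_ge].
Qed.

End P9.

Section P12.
Variable R : realType.
Local Notation C := (R[i]).
Local Notation cRe := (@complex.Re R).
Local Notation cIm := (@complex.Im R).

Definition rlin N (g : 'rV[R]_N -> R) := forall a v w, g (a *: v + w) = a * g v + g w.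
Definition clin m n (F : superop R m n -> C) := forall a X Y, F (a *: X + Y) = a * F X + F Y.

Lemma rlin_cont N (g : 'rV[R]_N -> R) : rlin g -> continuous g.
Proof.
move=> gl; have [K [K0 HK]] := rlin_bound gl.
apply: (lip_cont K0) => v w.
have -> : g v - g w = g (v - w).
  by have := gl (-1) w v; rewrite scaleN1r mulN1r (addrC (- w)) (addrC (- g w)) => ->.
exact: HK.
Qed.

Section Enc.
Variables m n : nat.
Local Notation Nv := (m * m * (n * n))%N.

Definition dec (v : 'rV[R]_(Nv + Nv)) : superop R m n :=
  vec_mx (map_mx (fun x : R => x%:C%C) (lsubmx v) + 'i%C *: map_mx (fun x : R => x%:C%C) (rsubmx v)).
Definition enc (P : superop R m n) : 'rV[R]_(Nv + Nv) :=
  row_mx (map_mx cRe (mxvec P)) (map_mx cIm (mxvec P)).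

Lemma decK P : dec (enc P) = P.
Proof.
rewrite /dec /enc row_mxKl row_mxKr -[RHS]mxvecK; congr vec_mx.
by apply/matrixP => i j; rewrite !mxE [RHS]complexE.
Qed.

Lemma decDZ a v w : dec (a *: v + w) = a%:C%C *: dec v + dec w.
Proof.
rewrite /dec -linearZ -linearD; congr vec_mx.
apply/matrixP => i j; rewrite !mxE !rmorphD !rmorphM /=; ring.
Qed.

Lemma dec_entry v j : mxvec (dec v) 0 j = (v 0 (lshift _ j))%:C%C + 'i%C * (v 0 (rshift _ j))%:C%C.
Proof. by rewrite /dec vec_mxK !mxE. Qed.

Lemma clin_dec (F : superop R m n -> C) : clin F ->
  rlin (fun v => cRe (F (dec v))) /\ rlin (fun v => cIm (F (dec v))).
Proof.
move=> hF; split => a v w; rewrite decDZ hF ?ReD ?ImD ?ReM ?ImM ?ReR ?ImR /=;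
  congr (_ + _); case: (F (dec v)) => x y /=; ring.
Qed.

Lemma eqC (z w : C) : z = w <-> cRe z = cRe w /\ cIm z = cIm w.
Proof. by case: z => a b; case: w => c d; split => [[-> ->]|[/= -> ->]]. Qed.

Lemma closed_ge0 (F : superop R m n -> C) : clin F -> closed [set v | 0 <= F (dec v)].
Proof.
move=> hF; have [lR lI] := clin_dec hF.
have -> : [set v | 0 <= F (dec v)] =
    [set v | cIm (F (dec v)) = 0] `&` [set v | 0 <= cRe (F (dec v))].
  apply/seteqP; split => v /=; first by rewrite ge0E => /andP[/eqP -> ->].
  by case=> I Rp; rewrite ge0E I Rp eqxx.
apply: closedI.
  have -> : [set v | cIm (F (dec v)) = 0] = (fun v => cIm (F (dec v))) @^-1` [set x | x = 0] by [].
  by apply: preimage_closed; [move=> x _; exact: rlin_cont | exact: closed_eq].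
have -> : [set v | 0 <= cRe (F (dec v))] = (fun v => cRe (F (dec v))) @^-1` [set x | 0 <= x] by [].
by apply: preimage_closed; [move=> x _; exact: rlin_cont | exact: closed_ge].
Qed.

Lemma closed_eqc (F : superop R m n -> C) c : clin F -> closed [set v | F (dec v) = c].
Proof.
move=> hF; have [lR lI] := clin_dec hF.
have -> : [set v | F (dec v) = c] =
    [set v | cRe (F (dec v)) = cRe c] `&` [set v | cIm (F (dec v)) = cIm c].
  by apply/seteqP; split => v /=; rewrite eqC.
apply: closedI.
  have -> : [set v | cRe (F (dec v)) = cRe c] = (fun v => cRe (F (dec v))) @^-1` [set x | x = cRe c] by [].
  by apply: preimage_closed; [move=> x _; exact: rlin_cont | exact: closed_eq].
have -> : [set v | cIm (F (dec v)) = cIm c] = (fun v => cIm (F (dec v))) @^-1` [set x | x = cIm c] by [].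
by apply: preimage_closed; [move=> x _; exact: rlin_cont | exact: closed_eq].
Qed.

End Enc.
End P12.

Section P13.
Variable R : realType.
Local Notation C := (R[i]).
Local Notation cRe := (@complex.Re R).
Local Notation cIm := (@complex.Im R).

Lemma P_entry m n (P : superop R m n) a b c d :
  P (mxvec_index a b) (mxvec_index c d) = soapp P (delta_mx a b) c d.
Proof. by rewrite /soapp mxvec_delta -rowE !mxE. Qed.

Lemma reim_split (x y : R) : cRe ((x%:C%C : C) + 'i%C * y%:C%C) = x /\ cIm ((x%:C%C : C) + 'i%C * y%:C%C) = y.
Proof. by split => /=; ring. Qed.

Lemma normc_le (z : C) : Normc.normc z <= `|cRe z| + `|cIm z|.
Proof.
case: z => a b /=.
have h : a ^+ 2 + b ^+ 2 <= (`|a| + `|b|) ^+ 2.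
  rewrite sqrrD -[a ^+ 2](real_normK (num_real a)) -[b ^+ 2](real_normK (num_real b)).
  have := mulr_ge0 (normr_ge0 a) (normr_ge0 b); lra.
apply: le_trans (ler_wsqrtr h) _.
by rewrite sqrtr_sqr ger0_norm // addr_ge0.
Qed.

Section MN.
Variables m n : nat.
Local Notation Nv := (m * m * (n * n))%N.
Local Notation D := (dephase R).

Definition DIset : set 'rV[R]_(Nv + Nv) := [set v | DI (@dec R m n v)].

Lemma DI_iff (P : superop R m n) : DI P <->
  ((forall k X, psdmx X -> forall x, 0 <= quad x (soapp (amp k P) X)) /\
   ((forall X, \tr (soapp P X) = \tr X) /\
    (forall i j, (socomp (D n) P - socomp (socomp (D n) P) (D m)) i j = 0))).
Proof.
split.
  move=> [[cP tP] e]; split; first by move=> k X pX x; exact: (cP k X pX x).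
  by split => // i j; rewrite -e subrr mxE.
move=> [cP [tP e]]; split; first by split => // k X pX x; exact: cP.
by apply/eqP; rewrite -subr_eq0; apply/eqP/matrixP => i j; rewrite e mxE.
Qed.

Lemma DIset_closed : closed DIset.
Proof.
have -> : DIset = [set v | (forall k X, psdmx X -> forall x, 0 <= quad x (soapp (amp k (@dec R m n v)) X)) /\
   ((forall X, \tr (soapp (@dec R m n v) X) = \tr X) /\
    (forall i j, (socomp (D n) (@dec R m n v) - socomp (socomp (D n) (@dec R m n v)) (D m)) i j = 0))].
  by apply/seteqP; split => v /DI_iff.
apply: closed_and.
  apply: closed_forall => k; apply: closed_forall => X; apply: closed_imp => _.
  apply: closed_forall => x.
  apply: (@closed_ge0 R m n (fun P => quad x (soapp (amp k P) X))) => a P Q.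
  by rewrite /amp sotensDZr soappTDZ quadD quadZ.
apply: closed_and.
  apply: closed_forall => X.
  apply: (@closed_eqc R m n (fun P => \tr (soapp P X))) => a P Q.
  by rewrite soappTDZ mxtraceD mxtraceZ.
apply: closed_forall => i; apply: closed_forall => j.
apply: (@closed_eqc R m n (fun P => (socomp (D n) P - socomp (socomp (D n) P) (D m)) i j)) => a P Q.
rewrite socompDr socompZr !socompDl !socompZl !mxE; ring.
Qed.

Lemma DIset_bound v : DIset v -> `|v| <= m%:R.
Proof.
move=> [qv _].
rewrite [leLHS]/normr /= mx_normrE.
apply: bigmax_le => // -[i j] _ /=; rewrite (ord1 i).
have key : forall j', `|cRe (mxvec (@dec R m n v) 0 j')| <= m%:R /\ `|cIm (mxvec (@dec R m n v) 0 j')| <= m%:R.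
  move=> j'; case: (mxvec_indexP j') => p q.
  case: (mxvec_indexP p) => a b; case: (mxvec_indexP q) => c d.
  by rewrite mxvecE P_entry; exact: quantum_entry_bound.
case: (split_ordP j) => j' ->.
  by have := (key j').1; rewrite dec_entry (reim_split _ _).1.
by have := (key j').2; rewrite dec_entry (reim_split _ _).2.
Qed.

Lemma DIset_bounded : bounded_set DIset.
Proof.
rewrite /=; rewrite /bounded_near; near=> M => v Av /=.
apply: le_trans (DIset_bound Av) _; near: M.
by apply: nbhs_pinfty_ge; exact: num_real.
Unshelve. all: by end_near.
Qed.

End MN.
End P13.

Section P14.
Variable R : realType.
Local Notation C := (R[i]).
Local Notation cRe := (@complex.Re R).
Local Notation cIm := (@complex.Im R).

Variables m n : nat.
Local Notation D := (dephase R).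

Lemma min_exists (nrm : superop R m n -> R) (Hn : norm_on_qspan nrm) (T : superop R m n) :
  quantum_op T ->
  exists P, DI P /\ forall P', DI P' ->
    nrm (socomp (D n) T - socomp (D n) P) <= nrm (socomp (D n) T - socomp (D n) P').
Proof.
move=> qT.
have [r [M [qM sM]]] := qspan_basis R m n.
pose coef i (X : superop R m n) := (mxvec X *m pinvmx M) 0 i.
pose Q i : superop R m n := vec_mx (row i M).
pose pi X := \sum_i coef i X *: Q i.
have piE : forall X, in_qspan X -> pi X = X.
  by move=> X qX; rewrite /pi /coef /Q -qspan_decomp //; exact: sM.
have qQ : forall i, in_qspan (Q i) by move=> i; apply: qspanQ; exact: qM.
have qpi : forall X, in_qspan (pi X).
  by move=> X; apply: qspan_sum => i _; apply: qspanZ.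
have coefl : forall i, clin (coef i).
  by move=> i a X Y; rewrite /coef linearP /= mulmxDl -scalemxAl !mxE.
have piB : forall X Y, pi X - pi Y = pi (X - Y).
  move=> X Y; rewrite /pi -sumrB; apply: eq_bigr => i _.
  have := coefl i (-1) Y X; rewrite scaleN1r mulN1r (addrC (- Y)) (addrC (- coef i Y)) => ->.
  by rewrite scalerBl.
have gl : forall i, clin (fun P => coef i (socomp (D n) P)).
  by move=> i a P P'; rewrite socompDr socompZr coefl.
have [KR hKR] := boolp.choice (fun i => rlin_bound (clin_dec (gl i)).1).
have [KI hKI] := boolp.choice (fun i => rlin_bound (clin_dec (gl i)).2).
pose DT := socomp (D n) T.
pose f v := nrm (pi (DT - socomp (D n) (@dec R m n v))).
pose K := \sum_i (KR i + KI i) * nrm (Q i).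
have K0 : 0 <= K.
  apply: sumr_ge0 => i _; apply: mulr_ge0; last exact: nrm_ge0.
  by apply: addr_ge0; [exact: (hKR i).1 | exact: (hKI i).1].
have decB : forall v w, @dec R m n (w - v) = @dec R m n w - @dec R m n v.
  move=> v w; have := decDZ (-1) v w; rewrite scaleN1r rmorphN1 scaleN1r => e.
  by rewrite addrC e addrC.
have lip : forall v w, `|f v - f w| <= K * `|v - w|.
  move=> v w.
  have e : pi (DT - socomp (D n) (@dec R m n v)) - pi (DT - socomp (D n) (@dec R m n w)) =
      pi (socomp (D n) (@dec R m n (w - v))).
    by rewrite piB decB socompBr; congr pi; rewrite opprB addrC addrA subrK.
  have bnd : nrm (pi (socomp (D n) (@dec R m n (w - v)))) <= K * `|v - w|.
    apply: le_trans (nrm_sum_le Hn _ qQ) _.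
    rewrite /K mulr_suml; apply: ler_sum => i _.
    rewrite mulrAC; apply: ler_wpM2r; first exact: nrm_ge0.
    apply: le_trans (normc_le _) _.
    rewrite mulrDl distrC; apply: lerD; [exact: (hKR i).2 | exact: (hKI i).2].
  rewrite ler_norml; apply/andP; split.
    rewrite lerNl opprB; apply: le_trans (nrm_rev Hn (qpi _) (qpi _)) _.
    by rewrite (nrmB_sym Hn) ?qpi // e.
  by apply: le_trans (nrm_rev Hn (qpi _) (qpi _)) _; rewrite e.
have cf : continuous f := lip_cont K0 lip.
have A0 : (@DIset R m n) !=set0.
  exists (enc (socomp (D n) (socomp T (D m)))); rewrite /DIset /= decK.
  exact: DI_sandwich.
have cA : compact ((@DIset R m n)).
  exact: (bounded_closed_compact (@DIset_bounded R m n) (@DIset_closed R m n)).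
have [c cA' minc] := compact_EVT_min A0 cA (continuous_subspaceT cf).
have Dc : DI (@dec R m n c) by move: cA'; rewrite inE.
have qdiff : forall P, DI P -> in_qspan (DT - socomp (D n) P).
  move=> P [qP _]; apply: qspanB; apply: qspanQ; apply: quantum_comp => //;
    exact: quantum_dephase.
exists (@dec R m n c); split => // P' DP'.
have := minc (enc P'); rewrite inE /DIset /= decK => /(_ DP').
by rewrite /f decK !piE //; apply: qdiff.
Qed.

End P14.

End Ana.
Import Ana.
Import boolp classical_sets reals topology normedtype derive.
Import ring lra.

Lemma normc_real (R : realType) (t : R) : 0 <= t -> Normc.normc (t%:C%C : R[i]) = t.
Proof.
move=> t0; rewrite /Normc.normc /= expr0n /= addr0 sqrtr_sqr ger0_norm //.
Qed.

Theorem proposition7 (R : realType) (nrm : forall m n : nat, superop R m n -> R)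
  (Hnorm : forall m n : nat, norm_on_qspan (nrm m n))
  (Hcomp : forall (m n k : nat) (T1 : superop R n k) (T2 : superop R m n),
      in_qspan T1 -> in_qspan T2 ->
      nrm m k (socomp T1 T2) <= nrm n k T1 * nrm m n T2)
  (Htens : forall (m1 n1 m2 n2 : nat) (T1 : superop R m1 n1) (T2 : superop R m2 n2),
      in_qspan T1 -> in_qspan T2 ->
      nrm (m1 * m2)%N (n1 * n2)%N (sotens T1 T2) <= nrm m1 n1 T1 * nrm m2 n2 T2)
  (HDI : forall (m n : nat) (P : superop R m n), DI P -> nrm m n P <= 1) :
  (* the minimum defining M is attained *)
  (forall (m n : nat) (T : superop R m n), quantum_op T ->
     exists P : superop R m n, DI P /\
       (forall P' : superop R m n, DI P' ->
          nrm m n (socomp (dephase R n) T - socomp (dephase R n) P)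
          <= nrm m n (socomp (dephase R n) T - socomp (dephase R n) P')) /\
       dist_DI nrm T = nrm m n (socomp (dephase R n) T - socomp (dephase R n) P))
  /\ DI_measure (dist_DI nrm).
Proof.
pose h m n (T P : superop R m n) := nrm m n (socomp (dephase R n) T - socomp (dephase R n) P).
have qdiff : forall m n (T P : superop R m n), quantum_op T -> quantum_op P ->
    in_qspan (socomp (dephase R n) T - socomp (dephase R n) P).
  move=> m n T P qT qP; apply: qspanB; apply: qspanQ; apply: quantum_comp => //;
    exact: quantum_dephase.
have hge0 : forall m n (T P : superop R m n), quantum_op T -> quantum_op P -> 0 <= h m n T P.
  by move=> m n T P qT qP; rewrite /h; apply: (nrm_ge0 (Hnorm m n)); exact: qdiff.
have dist_eq : forall m n (T P : superop R m n), quantum_op T -> DI P ->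
    (forall P', DI P' -> h m n T P <= h m n T P') -> dist_DI nrm T = h m n T P.
  move=> m n T P qT DP minP; rewrite /dist_DI.
  set E := (X in inf X).
  have EP : E (h m n T P) by exists P.
  have lb : lbound E (h m n T P) by move=> _ [P' DP' <-]; exact: minP.
  apply/eqP; rewrite eq_le; apply/andP; split.
    by apply: ge_inf => //; exists (h m n T P).
  by apply: lb_le_inf => //; exists (h m n T P).
have minE : forall m n (T : superop R m n), quantum_op T ->
    exists P, DI P /\ (forall P', DI P' -> h m n T P <= h m n T P') /\ dist_DI nrm T = h m n T P.
  move=> m n T qT; have [P [DP minP]] := min_exists (Hnorm m n) qT.
  by exists P; split => //; split => //; exact: dist_eq.
split; first exact: minE.
have dist_le : forall m n (T P : superop R m n), quantum_op T -> DI P -> dist_DI nrm T <= h m n T P.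
  move=> m n T P qT DP; have [P0 [DP0 [minP ->]]] := minE m n T qT; exact: minP.
have dist_ge0 : forall m n (T : superop R m n), quantum_op T -> 0 <= dist_DI nrm T.
  move=> m n T qT; have [P0 [[qP0 _] [_ ->]]] := minE m n T qT; exact: hge0.
split; first exact: dist_ge0.
split.
  move=> m n T qT; split.
    have [P0 [DP0 [_ ->]]] := minE m n T qT.
    move=> h0; have qP0 := DP0.1.
    have e : socomp (dephase R n) T = socomp (dephase R n) P0.
      by apply/eqP; rewrite -subr_eq0; apply/eqP; apply: (nrm_eq0 (Hnorm m n)); [exact: qdiff | exact: h0].
    by split => //; rewrite e; exact: DP0.2.
  move=> DT; apply/eqP; rewrite eq_le dist_ge0 // andbT.
  by apply: le_trans (dist_le _ _ _ _ qT DT) _; rewrite /h subrr (nrm0 (Hnorm m n)).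
have free_ind : forall m n m' n' (F : superop R m n -> superop R m' n'), free_superop F ->
    forall T, quantum_op T -> quantum_op (F T) /\ dist_DI nrm (F T) <= dist_DI nrm T.
  move=> m n m' n' F fF; elim: fF => {m n m' n' F}.
  -
    move=> m n k P DP T qT.
    have qPT : quantum_op (socomp P T) by apply: quantum_comp => //; exact: DP.1.
    split => //; have [P0 [DP0 [_ ->]]] := minE m n T qT.
    apply: le_trans (dist_le _ _ _ (socomp P P0) qPT (DI_comp DP DP0)) _.
    rewrite /h.
    have -> : socomp (dephase R k) (socomp P T) - socomp (dephase R k) (socomp P P0) =
        socomp (socomp (dephase R k) P) (socomp (dephase R n) T - socomp (dephase R n) P0).
      by rewrite socompBr !socompA -DP.2.
    apply: le_trans (Hcomp _ _ _ _ _ _ _) _.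
    + by apply: qspanQ; exact: (DI_DP DP).1.
    + by apply: qdiff => //; exact: DP0.1.
    rewrite -[X in _ <= X]mul1r; apply: ler_wpM2r; first by apply: hge0 => //; exact: DP0.1.
    exact: HDI (DI_DP DP).
  -
    move=> m n k P DP T qT.
    have qTP : quantum_op (socomp T P) by apply: quantum_comp => //; exact: DP.1.
    split => //; have [P0 [DP0 [_ ->]]] := minE m n T qT.
    apply: le_trans (dist_le _ _ _ (socomp P0 P) qTP (DI_comp DP0 DP)) _.
    rewrite /h !socompA -socompBl.
    apply: le_trans (Hcomp _ _ _ _ _ _ _) _.
    + by apply: qdiff => //; exact: DP0.1.
    + by apply: qspanQ; exact: DP.1.
    rewrite -[X in _ <= X]mulr1; apply: ler_wpM2l; first by apply: hge0 => //; exact: DP0.1.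
    exact: HDI DP.
  -
    move=> m n k l P DP T qT.
    have qTP : quantum_op (sotens T P) by apply: quantum_tens => //; exact: DP.1.
    split => //; have [P0 [DP0 [_ ->]]] := minE m n T qT.
    apply: le_trans (dist_le _ _ _ (sotens P0 P) qTP (DI_tens DP0 DP)) _.
    rewrite /h !dephase_tens -!sotens_comp -sotensBl.
    apply: le_trans (Htens _ _ _ _ _ _ _ _) _.
    + by apply: qdiff => //; exact: DP0.1.
    + by apply: qspanQ; exact: (DI_DP DP).1.
    rewrite -[X in _ <= X]mulr1; apply: ler_wpM2l; first by apply: hge0 => //; exact: DP0.1.
    exact: HDI (DI_DP DP).
  -
    move=> m n k l P DP T qT.
    have qPT : quantum_op (sotens P T) by apply: quantum_tens => //; exact: DP.1.
    split => //; have [P0 [DP0 [_ ->]]] := minE m n T qT.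
    apply: le_trans (dist_le _ _ _ (sotens P P0) qPT (DI_tens DP DP0)) _.
    rewrite /h !dephase_tens -!sotens_comp -sotensBr.
    apply: le_trans (Htens _ _ _ _ _ _ _ _) _.
    + by apply: qspanQ; exact: (DI_DP DP).1.
    + by apply: qdiff => //; exact: DP0.1.
    rewrite -[X in _ <= X]mul1r; apply: ler_wpM2r; first by apply: hge0 => //; exact: DP0.1.
    exact: HDI (DI_DP DP).
  -
    move=> m n m' n' m'' n'' F G _ IHF _ IHG T qT.
    have [qFT leF] := IHF T qT; have [qGFT leG] := IHG _ qFT.
    by split => //; exact: le_trans leG leF.
split.
  by move=> m n m' n' F T fF qT; exact: (free_ind _ _ _ _ F fF T qT).2.
move=> m n T S t ht qT qS.
have qX := quantum_conv ht qT qS.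
have [PT [DPT [_ ->]]] := minE m n T qT; have [PS [DPS [_ ->]]] := minE m n S qS.
have DQ := DI_conv ht DPT DPS.
apply: le_trans (dist_le _ _ _ _ qX DQ) _.
have /andP[t0 t1] := ht.
have t1' : 0 <= 1 - t by rewrite subr_ge0.
rewrite /h !socompDr !socompZr opprD addrACA -!scalerBr.
have q1 := qdiff _ _ _ _ qT DPT.1; have q2 := qdiff _ _ _ _ qS DPS.1.
apply: le_trans (nrmD (Hnorm m n) (qspanZ _ q1) (qspanZ _ q2)) _.
by rewrite !(nrmZ (Hnorm m n)) // !normc_real.
Qed.
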